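(* For any valuation profile $\mathbf u$ (of injective valuation functions of $n$ agents over $n$ items), every optimal allocation, i.e. every matching $\mu^*$ maximizing $\sum_i u_i(\mu_i)$, is an outcome of random priority with positive probability: there exists an ordering of the agents for which the serial-dictatorship procedure produces exactly $\mu^*$.
   Context: Agents $N=\{1,\dots,n\}$, items $M=\{1,\dots,n\}$, outcomes are bijections (matchings) $\mu$ with $\mu_i$ the item of agent $i$. Each agent $i$ has an injective valuation function $u_i:M\to\mathbb R$. Random priority picks a uniformly random ordering of agents and then, in that order, gives each agent its most preferred item among those still unassigned. *)

(* Defs.v *)
From HB Require Import structures.
From mathcomp Require Import all_boot all_order all_algebra all_fingroup.
Set Implicit Arguments. Unset Strict Implicit. Unset Printing Implicit Defensive.
Import Order.TTheory GRing.Theory Num.Theory.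
Local Open Scope ring_scope.

(* Agents and items are both 'I_n; a valuation profile is u : agent -> item -> R,
   u i x = value of item x to agent i. Matchings are permutations of 'I_n. *)

Definition favourite (R : realDomainType) (n : nat) (u : 'I_n -> 'I_n -> R)
  (i : 'I_n) (taken : seq 'I_n) : option 'I_n :=
  [pick x | (x \notin taken) && [forall y, (y \notin taken) ==> (u i y <= u i x)]].

Fixpoint serial_dictatorship (R : realDomainType) (n : nat)
  (u : 'I_n -> 'I_n -> R) (ord : seq 'I_n) (taken : seq 'I_n)
  : seq ('I_n * 'I_n) :=
  match ord with
  | [::] => [::]
  | i :: ord' =>
      match favourite u i taken with
      | Some x => (i, x) :: serial_dictatorship u ord' (x :: taken)
      | None => serial_dictatorship u ord' taken
      end
  end.

Definition order_of (n : nat) (sigma : {perm 'I_n}) : seq 'I_n :=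
  [seq sigma k | k <- enum 'I_n].

Definition sd_produces (R : realDomainType) (n : nat) (u : 'I_n -> 'I_n -> R)
  (sigma mu : {perm 'I_n}) : Prop :=
  serial_dictatorship u (order_of sigma) [::]
  = [seq (i, mu i) | i <- order_of sigma].

Definition welfare (R : realDomainType) (n : nat) (u : 'I_n -> 'I_n -> R)
  (mu : {perm 'I_n}) : R := \sum_(i < n) u i (mu i).

(* Main.v *)
Require Import Defs.
From HB Require Import structures.
From mathcomp Require Import all_boot all_order all_algebra all_fingroup.
From mathcomp Require Import zify.
Import Order.TTheory GRing.Theory Num.Theory.
Local Open Scope ring_scope.

Lemma iter_period (T : Type) (g : T -> T) (x : T) (p m : nat) :
  iter p g x = x -> iter (p * m) g x = x.
Proof.
move=> Hp; elim: m => [|m IH]; first by rewrite muln0.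
by rewrite mulnS iterD IH Hp.
Qed.

Lemma exists_top (R : realDomainType) (n : nat) (u : 'I_n -> 'I_n -> R)
  (mu : {perm 'I_n})
  (mu_opt : forall nu : {perm 'I_n}, welfare u nu <= welfare u mu)
  (S : {set 'I_n}) (taken : seq 'I_n)
  (inv : forall x, (x \in taken) = ((mu^-1)%g x \notin S))
  (i0 : 'I_n) (Hi0 : i0 \in S) :
  exists2 i, i \in S & [forall y, (y \notin taken) ==> (u i y <= u i (mu i))].
Proof.
case: (boolP [exists i in S, [forall y, (y \notin taken) ==> (u i y <= u i (mu i))]]).
  by move=> /existsP [i /andP [Hi Hf]]; exists i.
move=> Hno; exfalso.
have Hbad : forall i, i \in S -> exists y, (y \notin taken) && (u i (mu i) < u i y).
  move=> i Hi; apply/existsP; move: Hno; apply: contraR => Hn.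
  apply/existsP; exists i; rewrite Hi /=; apply/forallP => y; apply/implyP => Hy.
  rewrite leNgt; apply/negP => Hlt; move/negP: Hn; apply; apply/existsP; exists y.
  by rewrite Hy Hlt.
pose g i := if [pick y | (y \notin taken) && (u i (mu i) < u i y)] is Some y
            then (mu^-1)%g y else i.
have gS : forall i, i \in S -> g i \in S.
  move=> i Hi; rewrite /g; case: pickP => [y /andP [Hy _]|H0] //.
  by move: Hy; rewrite inv negbK.
have gbetter : forall i, i \in S -> u i (mu i) < u i (mu (g i)).
  move=> i Hi; rewrite /g; case: pickP => [y /andP [_ Hy]|H0].
    by rewrite permKV.
  by case: (Hbad i Hi) => y; rewrite H0.
have iterSS : forall k x, x \in S -> iter k g x \in S.
  by move=> k x Hx; elim: k => [|k IH] //=; apply: gS.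
pose P := [set x | (x \in S) && [exists k : 'I_n, iter k.+1 g x == x]].
have PS : forall x, x \in P -> x \in S by move=> x; rewrite inE => /andP [].
have Pg : forall x, x \in P -> g x \in P.
  move=> x; rewrite !inE => /andP [Hx /existsP [k /eqP Hk]].
  rewrite gS //=; apply/existsP; exists k; apply/eqP.
  by rewrite -iterSr iterS; congr (g _).
have Pper : forall x, x \in P -> exists p, (0 < p)%N /\ iter p g x = x.
  move=> x; rewrite inE => /andP [_ /existsP [k /eqP Hk]]; by exists k.+1.
have ginj : {in P &, injective g}.
  move=> x y Hx Hy Hxy.
  case: (Pper x Hx) => p [p0 Hp]; case: (Pper y Hy) => q [q0 Hq].
  have pq0 : (0 < p * q)%N by rewrite muln_gt0 p0 q0.
  rewrite -(@iter_period _ _ _ _ q Hp) -(@iter_period _ _ _ _ p Hq) mulnC.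
  by rewrite -(prednK (n:=(q * p)%N)) ?muln_gt0 ?p0 ?q0 // !iterSr Hxy.
have Pne : exists x, x \in P.
  pose f (k : 'I_n.+1) := iter k g i0.
  have : ~~ injectiveb f.
    apply/negP => /injectiveP Hf; move: (leq_card f Hf); rewrite !card_ord; lia.
  move=> /injectivePn [a [b Hab Hfab]].
  wlog lab : a b Hab Hfab / (a < b)%N.
    move=> W; case: (ltngtP a b) => H; first exact: (W a b).
      by apply: (W b a) => //; rewrite eq_sym.
    by move/eqP: Hab; case; apply: val_inj.
  exists (f a); rewrite inE iterSS //=.
  have bn : (b < n.+1)%N := ltn_ord b.
  have kn : (b - a - 1 < n)%N by lia.
  apply/existsP; exists (Ordinal kn); apply/eqP => /=.
  rewrite /f -iterD.
  rewrite -iterS; have -> : ((b - a - 1 + a).+1 = b)%N by lia.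
  by rewrite -/(f b) -Hfab.
case: Pne => p Hp.
pose h x := if x \in P then g x else x.
have hinj : injective h.
  move=> x y; rewrite /h; case: ifP => Hx; case: ifP => Hy.
  - exact: ginj.
  - by move=> E; move: (Pg x Hx); rewrite E Hy.
  - by move=> E; move: (Pg y Hy); rewrite -E Hx.
  - by [].
pose nu := (perm hinj * mu)%g.
have := mu_opt nu; apply/negP; rewrite -ltNge /welfare.
rewrite (bigD1 p) //= [X in _ < X](bigD1 p) //=.
rewrite ltr_leD //.
  by rewrite permM permE /h Hp gbetter // PS.
apply: ler_sum => i _; rewrite permM permE /h; case: ifP => // Hi.
by apply: ltW; apply: gbetter; apply: PS.
Qed.

Lemma fav_mu (R : realDomainType) (n : nat) (u : 'I_n -> 'I_n -> R)
  (u_inj : forall i : 'I_n, injective (u i)) (i x : 'I_n) (taken : seq 'I_n)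
  (Hx : x \notin taken)
  (Hf : [forall y, (y \notin taken) ==> (u i y <= u i x)]) :
  favourite u i taken = Some x.
Proof.
rewrite /favourite; case: pickP => [z /andP [Hz Hfz]|H0].
  congr Some; apply: (u_inj i); apply/eqP; rewrite eq_le.
  by rewrite (implyP (forallP Hf z) Hz) (implyP (forallP Hfz x) Hx).
by move: (H0 x); rewrite Hx Hf.
Qed.

Lemma main_ind (R : realDomainType) (n : nat) (u : 'I_n -> 'I_n -> R)
  (u_inj : forall i : 'I_n, injective (u i))
  (mu : {perm 'I_n})
  (mu_opt : forall nu : {perm 'I_n}, welfare u nu <= welfare u mu) (m : nat) :
  forall (S : {set 'I_n}) (taken : seq 'I_n), #|S| = m ->
  (forall x, (x \in taken) = ((mu^-1)%g x \notin S)) ->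
  exists ord, [/\ uniq ord, ord =i S &
     serial_dictatorship u ord taken = [seq (i, mu i) | i <- ord]].
Proof.
elim: m => [|m IH] S taken HS inv.
  exists [::]; split => //= x; move/eqP: HS; rewrite cards_eq0 => /eqP ->.
  by rewrite inE.
have [i0 Hi0] : exists i0, i0 \in S.
  by apply/set0Pn; rewrite -card_gt0 HS.
case: (@exists_top _ _ u mu mu_opt S taken inv i0 Hi0) => i Hi Hf.
have Hmi : mu i \notin taken by rewrite inv permK Hi.
have HS' : #|S :\ i| = m by rewrite (cardsD1 i S) Hi in HS; case: HS.
have inv' : forall x, (x \in mu i :: taken) = ((mu^-1)%g x \notin S :\ i).
  move=> x; rewrite in_cons inv !inE negb_and negbK.
  congr (_ || _); apply/eqP/eqP => [->|<-]; by rewrite ?permK ?permKV.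
case: (IH _ _ HS' inv') => ord [Hu Hm Hsd].
exists (i :: ord); split.
- by rewrite /= Hu Hm !inE eqxx.
- by move=> x; rewrite in_cons Hm !inE; case: eqP => // ->.
- by rewrite /= (@fav_mu _ _ u u_inj i (mu i) taken Hmi Hf) Hsd.
Qed.

Theorem lemma2 (R : realDomainType) (n : nat) (u : 'I_n -> 'I_n -> R)
  (u_inj : forall i : 'I_n, injective (u i))
  (mu : {perm 'I_n})
  (mu_opt : forall nu : {perm 'I_n}, welfare u nu <= welfare u mu) :
  exists sigma : {perm 'I_n}, sd_produces u sigma mu.
Proof.
have inv : forall x, (x \in [::]) = ((mu^-1)%g x \notin [set: 'I_n]).
  by move=> x; rewrite inE.
case: (@main_ind _ _ u u_inj mu mu_opt n [set: _] [::] (etrans (cardsT _) (card_ord n)) inv) => ord [Hu Hm Hsd].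
have Hp : perm_eq ord (ord_tuple n).
  apply: uniq_perm => //; first exact: enum_uniq.
  by move=> x; rewrite Hm inE mem_enum.
case/tuple_permP: Hp => p Hp.
exists p; rewrite /sd_produces.
have -> : order_of p = ord.
  rewrite Hp /order_of /=; apply: eq_map => k; by rewrite tnth_ord_tuple.
exact: Hsd.
Qed.
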